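(* Let $p$ be a prime, $C\subseteq\mathbb{F}_p^{2n}$ a symplectic self-orthogonal code with stabilizer code $Q(C)\subseteq\mathbb{C}^{p^n}$, and let $\emptyset\neq I\subsetneq J\subsetneq\{1,\dots,n\}$. If \[\sigma_I\left[\pi_J\left(C^{\perp_s}\right)\right]=\sigma_I(C),\] then $Q(C)$ is $(I,J)$-locally recoverable.
   Context: Vectors of $\mathbb{F}_p^{2n}$ are written $(\mathbf a|\mathbf b)$, $\mathbf a,\mathbf b\in\mathbb F_p^n$, coordinate pair $(a_j,b_j)$ indexed by $j\in\{1,\dots,n\}$. Symplectic form: $(\mathbf a|\mathbf b)\cdot_s(\mathbf c|\mathbf d)=\mathbf a\cdot\mathbf d-\mathbf b\cdot\mathbf c$; $C^{\perp_s}$ is the dual; $C$ is symplectic self-orthogonal if $C\subseteq C^{\perp_s}$. For $R\subseteq\{1,\dots,n\}$: $\pi_R(\mathbf a|\mathbf b)=(a_j|b_j)_{j\in R}$, puncturing $\pi_R(D)=\{\pi_R(\mathbf y):\mathbf y\in D\}$, shortening $\sigma_R(D)=\{\pi_R(\mathbf y):\mathbf y=(\mathbf a|\mathbf b)\in D,\ \mathrm{supp}(\mathbf a)\cup\mathrm{supp}(\mathbf b)\subseteq R\}$; for $I\subseteq J$ the shortening at $I$ of a code in $\mathbb F_p^{2|J|}$ (pairs indexed by $J$) is defined the same way. Quantum setting: $\xi=e^{2\pi\iota/p}$, $X(a)|x\rangle=|x+a\rangle$, $Z(b)|x\rangle=\xi^{bx}|x\rangle$ on $\mathbb C^p$, $E_{(\mathbf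 a,\mathbf b)}=\bigotimes_jX(a_j)Z(b_j)$. $Q(C)$ is the common eigenspace $\{v:Ev=\lambda(E)v\ \forall E\in S\}$, $S$ the commutative group generated by scalars $\xi^\ell\mathcal I$ and $E_{\mathbf y}$, $\mathbf y\in C$, $\lambda$ a character of $S$ with $\lambda(\xi\mathcal I)=\xi$. Let $\Gamma(\rho)=p^{-2}\sum_{a,b}X(a)Z(b)\rho (X(a)Z(b))^\dagger$, and $\Gamma^I$ apply $\Gamma$ to the qudits indexed by $I$ and the identity elsewhere. For $\emptyset\ne I\subsetneq J$, a code $Q$ is $(I,J)$-locally recoverable if there is a trace-preserving quantum operation $\mathcal R$ acting only on the qudits indexed by $J$ (identity on the others) with $\mathcal R\circ\Gamma^I(|\varphi\rangle\langle\varphi|)=|\varphi\rangle\langle\varphi|$ for all $|\varphi\rangle\in Q$. *)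

(* Defs.v *)
From mathcomp Require Import all_boot all_order all_algebra all_field.
Set Implicit Arguments. Unset Strict Implicit. Unset Printing Implicit Defensive.
Import Order.TTheory GRing.Theory Num.Theory.
Local Open Scope ring_scope.

Section Defs.
Variables (p n : nat).

(** Vectors (a|b) of F_p^{2n}: pairs of row vectors; coordinate j : 'I_n
    (0-based indexing of {1,...,n}). *)
Definition vec := ('rV['F_p]_n * 'rV['F_p]_n)%type.

Definition code_subspace (C : {set vec}) : Prop :=
  ((0 : 'rV['F_p]_n), (0 : 'rV['F_p]_n)) \in C /\
  forall (c : 'F_p) (u v : vec), u \in C -> v \in C ->
    (c *: u.1 + v.1, c *: u.2 + v.2) \in C.

Definition sform (x y : vec) : 'F_p :=
  \sum_(j < n) x.1 0 j * y.2 0 j - \sum_(j < n) x.2 0 j * y.1 0 j.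

Definition sdual (C : {set vec}) : {set vec} :=
  [set y | [forall x in C, sform x y == 0]].

Definition supp (y : vec) : {set 'I_n} :=
  [set j | (y.1 0 j != 0) || (y.2 0 j != 0)].

(** pi_R(y): restriction to the coordinate pairs in R.  A vector of
    F_p^{2|R|} (pairs indexed by R) is encoded by its extension by zero
    outside R; this encoding is injective for fixed R. *)
Definition proj (R : {set 'I_n}) (y : vec) : vec :=
  (\row_j (if j \in R then y.1 0 j else 0), \row_j (if j \in R then y.2 0 j else 0)).

Definition puncturing (R : {set 'I_n}) (D : {set vec}) : {set vec} :=
  [set proj R y | y in D].

Definition shortening (R : {set 'I_n}) (D : {set vec}) : {set vec} :=
  [set proj R y | y in [set y in D | supp y \subset R]].

(** Quantum setting.  Basis states |x>, x : 'I_n -> F_p, of C^{p^n};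
    operators are functions (row index) -> (column index) -> algC. *)
Definition cfg := {ffun 'I_n -> 'F_p}.
Definition ket := cfg -> algC.
Definition op := cfg -> cfg -> algC.

(** xi = e^{2 pi i / p}: p.-root (-1) = e^{i pi / p} (root of minimal argument) *)
Definition xi : algC := (p.-root (-1)) ^+ 2.

Definition idop : op := fun y x => (y == x)%:R.
Definition scaleop (c : algC) (A : op) : op := fun y x => c * A y x.
Definition mulop (A B : op) : op := fun y x => \sum_(z : cfg) A y z * B z x.
Definition addop (A B : op) : op := fun y x => A y x + B y x.
Definition adjop (A : op) : op := fun y x => (A x y)^*.
Definition trace (A : op) : algC := \sum_(x : cfg) A x x.
Definition applyop (A : op) (v : ket) : ket := fun y => \sum_(x : cfg) A y x * v x.
Definition outer (v : ket) : op := fun y x => v y * (v x)^*.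
Definition op_eq (A B : op) : Prop := forall y x, A y x = B y x.

(** E_(a,b) = (X)(a_j) Z(b_j) tensor product:
    E |x> = xi^(sum_j b_j x_j) |x + a>, written factor by factor. *)
Definition Eop (y : vec) : op := fun u x =>
  (u == [ffun j => x j + y.1 0 j])%:R *
  \prod_(j < n) xi ^+ (nat_of_ord (y.2 0 j * x j)).

(** The stabilizer group S: generated by the scalars xi^l I and the E_y,
    y in C (a finite group, so the generated monoid is the generated group). *)
Inductive inS (C : {set vec}) : op -> Prop :=
  | inS_scal (l : nat) : inS C (scaleop (xi ^+ l) idop)
  | inS_E (y : vec) : y \in C -> inS C (Eop y)
  | inS_mul (A B : op) : inS C A -> inS C B -> inS C (mulop A B).

Definition is_character (C : {set vec}) (lam : op -> algC) : Prop :=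
  (forall A B, inS C A -> inS C B -> lam (mulop A B) = lam A * lam B) /\
  lam (scaleop xi idop) = xi.

Definition Qcode (C : {set vec}) (lam : op -> algC) (v : ket) : Prop :=
  forall A, inS C A -> forall u, applyop A v u = lam A * v u.

Definition unitvec (i : 'I_n) (c : 'F_p) : 'rV['F_p]_n :=
  \row_j (if j == i then c else 0).
Definition XZat (i : 'I_n) (a b : 'F_p) : op := Eop (unitvec i a, unitvec i b).

Definition gamma_at (i : 'I_n) (rho : op) : op :=
  scaleop ((p ^ 2)%:R^-1)
    (fun u x => \sum_(a : 'F_p) \sum_(b : 'F_p)
        mulop (mulop (XZat i a b) rho) (adjop (XZat i a b)) u x).

(** Gamma^I: Gamma on each qudit of I (these commute) *)
Definition GammaI (I : {set 'I_n}) (rho : op) : op :=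
  foldr gamma_at rho (enum I).

(** Operators acting only on qudits in J: B_J (x) identity on the others. *)
Definition restr (J : {set 'I_n}) (x : cfg) : cfg :=
  [ffun j => if j \in J then x j else 0].
Definition agree_off (J : {set 'I_n}) (u x : cfg) : bool :=
  [forall j, (j \notin J) ==> (u j == x j)].
Definition liftJ (J : {set 'I_n}) (B : op) : op := fun u x =>
  (agree_off J u x)%:R * B (restr J u) (restr J x).

Definition kraus_map (m : nat) (K : 'I_m -> op) (rho : op) : op :=
  fun u x => \sum_(k < m) mulop (mulop (K k) rho) (adjop (K k)) u x.

Definition locally_recoverable (I J : {set 'I_n}) (Q : ket -> Prop) : Prop :=
  exists (m : nat) (B : 'I_m -> op),
    let R := kraus_map (fun k => liftJ J (B k)) in
    (forall rho : op, trace (R rho) = trace rho) /\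
    (forall phi : ket, Q phi -> op_eq (R (GammaI I (outer phi))) (outer phi)).

End Defs.

(* Main.v *)
Require Import Defs.
From mathcomp Require Import all_boot all_order all_algebra all_field.
From Stdlib Require Import FunctionalExtensionality IndefiniteDescription.
From mathcomp Require Import ring.
Set Implicit Arguments. Unset Strict Implicit. Unset Printing Implicit Defensive.
Import Order.TTheory GRing.Theory Num.Theory.
Local Open Scope ring_scope.

Section Ch.
Variable p : nat.
Hypothesis Hp : prime p.

Lemma p_gt0 : (0 < p)%N. Proof. exact: prime_gt0. Qed.
Lemma p_gt1 : (1 < p)%N. Proof. exact: prime_gt1. Qed.

Lemma xi_p : xi p ^+ p = 1.
Proof.
rewrite /xi -exprM mulnC exprM rootCK ?p_gt0 //.
by rewrite expr2 mulrNN mulr1.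
Qed.

Lemma m1_neq1 : ((-1 : algC) == 1) = false.
Proof. apply: lt_eqF; exact: lt_trans (ltrN10 _) ltr01. Qed.

Lemma xi_neq1 : xi p != 1.
Proof.
apply/negP => /eqP H.
have : (p.-root (-1 : algC)) ^+ 2 == 1 by rewrite -/(xi p) H.
rewrite sqrf_eq1 => /orP [] /eqP H1.
- have := rootCK p_gt0 (-1 : algC). rewrite H1 expr1n => /eqP.
  by rewrite eq_sym m1_neq1.
- have := rootC_lt0 (-1 : algC) p_gt1. by rewrite H1 ltrN10.
Qed.

Lemma xi_prim : p.-primitive_root (xi p).
Proof.
have [m Hm Hmp] := prim_order_exists p_gt0 xi_p.
case/primeP: Hp => _ /(_ m Hmp) /orP [] /eqP Em; subst m => //.
have := prim_expr_order Hm; rewrite expr1 => H.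
by have := xi_neq1; rewrite H eqxx.
Qed.

Definition ch (a : 'F_p) : algC := xi p ^+ (nat_of_ord a).

Lemma Fp_val_lt (a : 'F_p) : (nat_of_ord a < p)%N.
Proof. have := ltn_ord a; by rewrite [X in (_ < X)%N -> _]Fp_cast. Qed.

Lemma Fp_val_add (a b : 'F_p) : nat_of_ord (a + b) = ((nat_of_ord a + nat_of_ord b) %% p)%N.
Proof. rewrite /=; congr (_ %% _)%N; exact: Fp_cast. Qed.

Lemma ch_add a b : ch (a + b) = ch a * ch b.
Proof. by rewrite /ch Fp_val_add expr_mod ?xi_p // exprD. Qed.

Lemma ch0 : ch 0 = 1.
Proof. by rewrite /ch expr0. Qed.

Lemma ch_neq0 a : ch a != 0.
Proof.
apply/negP => /eqP H.
have := ch_add a (-a); rewrite subrr ch0 H mul0r => /eqP.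
by rewrite oner_eq0.
Qed.

Lemma ch_opp a : ch (- a) = (ch a)^-1.
Proof.
apply: (mulfI (ch_neq0 a)); rewrite -ch_add subrr ch0 divff //; exact: ch_neq0.
Qed.

Lemma ch_sub a b : ch (a - b) = ch a / ch b.
Proof. by rewrite ch_add ch_opp. Qed.

Lemma ch_eq1 a : ch a = 1 -> a = 0.
Proof.
move=> H; have Hd : (p %| nat_of_ord a)%N.
  by rewrite (prim_order_dvd xi_prim) -/(ch a) H eqxx.
case: (posnP (nat_of_ord a)) => [H0| Hpos].
  by apply/val_inj; rewrite /= H0.
by have := dvdn_leq Hpos Hd; rewrite leqNgt Fp_val_lt.
Qed.

Lemma norm_xi : `|xi p| = 1.
Proof.
apply/eqP; rewrite -(pexpr_eq1 p_gt0) ?normr_ge0 //.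
by rewrite -normrX xi_p normr1.
Qed.

Lemma norm_ch a : `|ch a| = 1.
Proof. by rewrite /ch normrX norm_xi expr1n. Qed.

Lemma ch_conj a : (ch a)^* = ch (- a).
Proof.
rewrite ch_opp; apply: (mulfI (ch_neq0 a)).
rewrite -normCK norm_ch expr1n divff //; exact: ch_neq0.
Qed.

Lemma ch_mulconj a : ch a * (ch a)^* = 1.
Proof. by rewrite -normCK norm_ch expr1n. Qed.

Lemma ch_sum (I : Type) (r : seq I) (P : pred I) (F : I -> 'F_p) :
  ch (\sum_(i <- r | P i) F i) = \prod_(i <- r | P i) ch (F i).
Proof. exact: (big_morph ch ch_add ch0). Qed.


End Ch.

Section Ops.
Variables p n : nat.
Hypothesis Hp : prime p.
Local Notation F := 'F_p.
Local Notation vec := (vec p n).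
Local Notation cfg := (cfg p n).
Local Notation op := (op p n).
Local Notation ket := (ket p n).


Ltac opext := let y := fresh "y" in let x := fresh "x" in
  apply: functional_extensionality => y; apply: functional_extensionality => x.

Definition rf (a : 'rV[F]_n) : cfg := [ffun j => a 0 j].
Definition rdot (r : 'rV[F]_n) (x : cfg) : F := \sum_j r 0 j * x j.
Definition dot (a b : 'rV[F]_n) : F := \sum_j a 0 j * b 0 j.

Lemma rfD a b : rf (a + b) = rf a + rf b.
Proof. by apply/ffunP => j; rewrite !ffunE mxE. Qed.
Lemma rfN a : rf (- a) = - rf a.
Proof. by apply/ffunP => j; rewrite !ffunE mxE. Qed.
Lemma rf0 : rf 0 = 0.
Proof. by apply/ffunP => j; rewrite !ffunE mxE. Qed.

Lemma rdotDr r x y : rdot r (x + y) = rdot r x + rdot r y.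
Proof. by rewrite /rdot -big_split; apply: eq_bigr => j _; rewrite ffunE mulrDr. Qed.
Lemma rdotNr r x : rdot r (- x) = - rdot r x.
Proof. by rewrite /rdot -sumrN; apply: eq_bigr => j _; rewrite ffunE mulrN. Qed.
Lemma rdotBr r x y : rdot r (x - y) = rdot r x - rdot r y.
Proof. by rewrite rdotDr rdotNr. Qed.
Lemma rdotDl r s x : rdot (r + s) x = rdot r x + rdot s x.
Proof. by rewrite /rdot -big_split; apply: eq_bigr => j _; rewrite mxE mulrDl. Qed.
Lemma rdotNl r x : rdot (- r) x = - rdot r x.
Proof. by rewrite /rdot -sumrN; apply: eq_bigr => j _; rewrite mxE mulNr. Qed.
Lemma rdot0l x : rdot 0 x = 0.
Proof. by rewrite /rdot big1 // => j _; rewrite mxE mul0r. Qed.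
Lemma rdot_rf r a : rdot r (rf a) = dot r a.
Proof. by rewrite /rdot /dot; apply: eq_bigr => j _; rewrite ffunE. Qed.

Lemma Eop_E y u x : Eop y u x = (u == x + rf y.1)%:R * ch (rdot y.2 x).
Proof.
rewrite /Eop; congr (_ * _).
  by congr (_%:R); congr (_ == _); apply/ffunP => j; rewrite !ffunE.
by rewrite /rdot (ch_sum Hp).
Qed.

Lemma sum_pick (F0 : cfg -> algC) c g :
  \sum_z F0 z * ((z == c)%:R * g) = F0 c * g.
Proof.
rewrite (bigD1 c) //= eqxx mul1r big1 ?addr0 // => z /negbTE ->.
by rewrite mul0r mulr0.
Qed.

Lemma Emul a b : mulop (Eop a) (Eop b) = scaleop (ch (dot a.2 b.1)) (Eop (a + b)).
Proof.
opext.
rewrite /mulop /scaleop.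
rewrite (eq_bigr (fun z => Eop a y z * ((z == x + rf b.1)%:R * ch (rdot b.2 x)))); last first.
  by move=> z _; rewrite (Eop_E b).
rewrite sum_pick !Eop_E /= rfD rdotDl rdotDr rdot_rf (addrC (rf a.1)) addrA.
rewrite !(ch_add Hp); set u := (_ == _)%:R.
ring.
Qed.

Lemma eq_shift (x y r : cfg) : (x == y + r) = (y == x - r).
Proof. by rewrite [RHS]eq_sym subr_eq. Qed.

Lemma Eadj a : adjop (Eop a) = scaleop (ch (dot a.2 a.1)) (Eop (- a)).
Proof.
opext; rewrite /adjop /scaleop !Eop_E /= rmorphM /= rmorph_nat (ch_conj Hp) eq_shift rfN.
case: eqP => [->|_]; last by rewrite !mul0r mulr0.
rewrite rdotNl rdotBr rdot_rf !mul1r -(ch_add Hp); congr ch.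
by rewrite opprB.
Qed.


Lemma E0 : Eop 0 = @idop p n.
Proof.
opext; rewrite Eop_E /= rf0 addr0 rdot0l ch0 mulr1 /idop //.
Qed.

Lemma mulopA (A B D : op) : mulop (mulop A B) D = mulop A (mulop B D).
Proof.
opext; rewrite /mulop.
under eq_bigr => z _ do rewrite big_distrl /=.
rewrite exchange_big; apply: eq_bigr => w _.
by rewrite big_distrr /=; apply: eq_bigr => z _; rewrite -mulrA.
Qed.

Lemma mulop1 (A : op) : mulop A (@idop p n) = A.
Proof.
opext; rewrite /mulop /idop (bigD1 x) //= eqxx mulr1 big1 ?addr0 // => z /negbTE.
by rewrite eq_sym => ->; rewrite mulr0.
Qed.

Lemma mul1op (A : op) : mulop (@idop p n) A = A.
Proof.
opext; rewrite /mulop /idop (bigD1 y) //= eqxx mul1r big1 ?addr0 // => z /negbTE.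
by rewrite eq_sym => ->; rewrite mul0r.
Qed.

Lemma mulopZl c (A B : op) : mulop (scaleop c A) B = scaleop c (mulop A B).
Proof. by opext; rewrite /mulop /scaleop big_distrr; apply: eq_bigr => z _; rewrite -mulrA. Qed.

Lemma mulopZr c (A B : op) : mulop A (scaleop c B) = scaleop c (mulop A B).
Proof. by opext; rewrite /mulop /scaleop big_distrr; apply: eq_bigr => z _; rewrite mulrCA. Qed.

Lemma scaleopA a b (A : op) : scaleop a (scaleop b A) = scaleop (a * b) A.
Proof. by opext; rewrite /scaleop mulrA. Qed.

Lemma scaleop1 (A : op) : scaleop 1 A = A.
Proof. by opext; rewrite /scaleop mul1r. Qed.

Lemma adjopK (A : op) : adjop (adjop A) = A.
Proof. by opext; rewrite /adjop conjCK. Qed.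

Lemma adjopM (A B : op) : adjop (mulop A B) = mulop (adjop B) (adjop A).
Proof.
opext; rewrite /adjop /mulop rmorph_sum; apply: eq_bigr => z _.
by rewrite rmorphM mulrC.
Qed.

Lemma adjopZ c (A : op) : adjop (scaleop c A) = scaleop c^* (adjop A).
Proof. by opext; rewrite /adjop /scaleop rmorphM. Qed.

Definition osum (T : finType) (P : pred T) (G : T -> op) : op :=
  fun y x => \sum_(t | P t) G t y x.

Lemma mulop_suml (T : finType) (P : pred T) (G : T -> op) B :
  mulop (osum P G) B = osum P (fun t => mulop (G t) B).
Proof.
opext; rewrite /mulop /osum.
under eq_bigr => z _ do rewrite big_distrl /=.
by rewrite exchange_big.
Qed.

Lemma mulop_sumr (T : finType) (P : pred T) (G : T -> op) A :
  mulop A (osum P G) = osum P (fun t => mulop A (G t)).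
Proof.
opext; rewrite /mulop /osum.
under eq_bigr => z _ do rewrite big_distrr /=.
by rewrite exchange_big.
Qed.

Lemma adjop_sum (T : finType) (P : pred T) (G : T -> op) :
  adjop (osum P G) = osum P (fun t => adjop (G t)).
Proof. by opext; rewrite /adjop /osum rmorph_sum. Qed.

Lemma scaleop_sum c (T : finType) (P : pred T) (G : T -> op) :
  scaleop c (osum P G) = osum P (fun t => scaleop c (G t)).
Proof. by opext; rewrite /scaleop /osum big_distrr. Qed.

Lemma osum_scale (T : finType) (P : pred T) (f : T -> algC) (A : op) :
  osum P (fun t => scaleop (f t) A) = scaleop (\sum_(t | P t) f t) A.
Proof. by opext; rewrite /scaleop /osum big_distrl. Qed.

Lemma eq_osum (T : finType) (P : pred T) (G1 G2 : T -> op) :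
  (forall t, P t -> G1 t = G2 t) -> osum P G1 = osum P G2.
Proof. by move=> H; opext; rewrite /osum; apply: eq_bigr => t /H ->. Qed.

Lemma osum_swap (T1 T2 : finType) (P1 : pred T1) (P2 : pred T2) (G : T1 -> T2 -> op) :
  osum P1 (fun s => osum P2 (G s)) = osum P2 (fun t => osum P1 (fun s => G s t)).
Proof. by opext; rewrite /osum exchange_big. Qed.

Lemma applyopM (A B : op) (v : ket) : applyop (mulop A B) v = applyop A (applyop B v).
Proof.
apply: functional_extensionality => u; rewrite /applyop /mulop.
under eq_bigr => z _ do rewrite big_distrl /=.
rewrite exchange_big; apply: eq_bigr => w _.
by rewrite big_distrr /=; apply: eq_bigr => z _; rewrite -mulrA.
Qed.

Lemma applyopZ c (A : op) (v : ket) : applyop (scaleop c A) v = (fun u => c * applyop A v u).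
Proof.
by apply: functional_extensionality => u; rewrite /applyop /scaleop big_distrr; apply: eq_bigr => z _; rewrite -mulrA.
Qed.

Lemma applyop_sum (T : finType) (P : pred T) (G : T -> op) (v : ket) :
  applyop (osum P G) v = (fun u => \sum_(t | P t) applyop (G t) v u).
Proof.
apply: functional_extensionality => u; rewrite /applyop /osum.
under eq_bigr => z _ do rewrite big_distrl /=.
by rewrite exchange_big.
Qed.

Lemma applyop1 (v : ket) : applyop (@idop p n) v = v.
Proof.
apply: functional_extensionality => u; rewrite /applyop /idop (bigD1 u) //= eqxx mul1r big1 ?addr0 // => z /negbTE.
by rewrite eq_sym => ->; rewrite mul0r.
Qed.

Lemma applyopE a (v : ket) u :
  applyop (Eop a) v u = ch (rdot a.2 (u - rf a.1)) * v (u - rf a.1).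
Proof.
rewrite /applyop (bigD1 (u - rf a.1)) //= Eop_E subrK eqxx mul1r big1 ?addr0 // => z Hz.
by rewrite Eop_E eq_shift (negbTE Hz) !mul0r.
Qed.

Lemma outer_conj (A : op) (v : ket) :
  mulop (mulop A (outer v)) (adjop A) = outer (applyop A v).
Proof.
opext; rewrite /mulop /outer /adjop /applyop rmorph_sum big_distrr /=.
apply: eq_bigr => z _; rewrite rmorphM /= !big_distrl /=.
by apply: eq_bigr => w _; ring.
Qed.

Lemma outerZ c (v : ket) : outer (fun u => c * v u) = scaleop (c * c^*) (outer v).
Proof. by opext; rewrite /outer /scaleop rmorphM /=; ring. Qed.


Lemma dotDl a b c : dot (a + b) c = dot a c + dot b c.
Proof. by rewrite /dot -big_split; apply: eq_bigr => j _; rewrite mxE mulrDl. Qed.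
Lemma dotDr a b c : dot c (a + b) = dot c a + dot c b.
Proof. by rewrite /dot -big_split; apply: eq_bigr => j _; rewrite mxE mulrDr. Qed.
Lemma dotNl a c : dot (- a) c = - dot a c.
Proof. by rewrite /dot -sumrN; apply: eq_bigr => j _; rewrite mxE mulNr. Qed.
Lemma dotNr a c : dot c (- a) = - dot c a.
Proof. by rewrite /dot -sumrN; apply: eq_bigr => j _; rewrite mxE mulrN. Qed.
Lemma dotC a b : dot a b = dot b a.
Proof. by rewrite /dot; apply: eq_bigr => j _; rewrite mulrC. Qed.
Lemma dot0l a : dot 0 a = 0.
Proof. by rewrite /dot big1 // => j _; rewrite mxE mul0r. Qed.
Lemma dot0r a : dot a 0 = 0.
Proof. by rewrite dotC dot0l. Qed.

Lemma sformE (x y : vec) : sform x y = dot x.1 y.2 - dot x.2 y.1.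
Proof. by []. Qed.

Lemma sformDl (x y z : vec) : sform (x + y) z = sform x z + sform y z.
Proof. rewrite !sformE /= !dotDl; ring. Qed.
Lemma sformNl (x z : vec) : sform (- x) z = - sform x z.
Proof. rewrite !sformE /= !dotNl; ring. Qed.
Lemma sformBl (x y z : vec) : sform (x - y) z = sform x z - sform y z.
Proof. by rewrite sformDl sformNl. Qed.
Lemma sformDr (x y z : vec) : sform z (x + y) = sform z x + sform z y.
Proof. rewrite !sformE /= !dotDr; ring. Qed.
Lemma sformNr (x z : vec) : sform z (- x) = - sform z x.
Proof. rewrite !sformE /= !dotNr; ring. Qed.
Lemma sformBr (x y z : vec) : sform z (x - y) = sform z x - sform z y.
Proof. by rewrite sformDr sformNr. Qed.
Lemma sform0l (z : vec) : sform 0 z = 0.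
Proof. by rewrite sformE /= !dot0l subrr. Qed.
Lemma sform0r (z : vec) : sform z 0 = 0.
Proof. by rewrite sformE /= !dot0r subrr. Qed.

Lemma adjE_E (c : vec) : mulop (adjop (Eop c)) (Eop c) = @idop p n.
Proof.
rewrite Eadj mulopZl Emul scaleopA -(ch_add Hp).
have -> : - c + c = 0 by apply/eqP; rewrite addrC subr_eq0.
by rewrite E0 /= dotNl addrN ch0 scaleop1.
Qed.

Lemma Ecomm (c v : vec) : mulop (Eop c) (Eop v) = scaleop (ch (- sform c v)) (mulop (Eop v) (Eop c)).
Proof.
rewrite !Emul scaleopA -(ch_add Hp) addrC sformE; congr (scaleop (ch _) _).
by rewrite (dotC c.1) (dotC c.2); ring.
Qed.

Lemma Econj (t u : vec) : mulop (mulop (Eop t) (Eop u)) (adjop (Eop t)) = scaleop (ch (sform u t)) (Eop u).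
Proof.
rewrite Eadj Emul mulopZl mulopZr Emul !scaleopA -!(ch_add Hp).
have -> : t + u - t = u by rewrite addrC addrA addNr add0r.
rewrite sformE; congr (scaleop (ch _) _).
rewrite /= dotDl !dotNr (dotC u.1); ring.
Qed.


Lemma char_sum0 (G : {set vec}) (f : vec -> F) (g : vec) :
  (forall u v, u \in G -> v \in G -> u + v \in G) ->
  (forall u v, u \in G -> v \in G -> u - v \in G) ->
  (forall u v, f (u + v) = f u + f v) ->
  g \in G -> f g != 0 -> \sum_(u in G) ch (f u) = 0.
Proof.
move=> HD HB Hf Hg Hfg.
set S := \sum_(u in G) _.
have HS : S = ch (f g) * S.
  rewrite /S big_distrr /= (reindex (fun u : vec => u + g)) /=; last first.
    by exists (fun u : vec => u - g) => u _; rewrite ?addrK ?subrK.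
  apply: eq_big => u.
    apply/idP/idP => Hu; first by rewrite -(addrK g u); apply: HB.
    exact: HD.
  by move=> _; rewrite Hf (ch_add Hp) mulrC.
have : (1 - ch (f g)) * S = 0 by rewrite mulrBl mul1r -HS subrr.
move/eqP; rewrite mulf_eq0 subr_eq0 => /orP [/eqP H|/eqP //].
by move: Hfg; rewrite -(ch_eq1 Hp (esym H)) eqxx.
Qed.


Lemma dot_unit a j c : dot a (unitvec j c) = a 0 j * c.
Proof.
rewrite /dot (bigD1 j) //= big1 ?addr0 => [|k /negbTE Hk]; rewrite mxE ?eqxx //.
by rewrite Hk mulr0.
Qed.

Lemma row_neq0 (a : 'rV[F]_n) : a != 0 -> exists j, a 0 j != 0.
Proof.
move=> Ha; apply/existsP; apply: contraR Ha => /existsPn H.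
by apply/eqP/rowP => j; rewrite mxE; apply/eqP; move: (H j); rewrite negbK.
Qed.

Lemma sform_nondeg (c : vec) : c != 0 -> exists g, sform c g != 0.
Proof.
case: c => c1 c2 Hc.
have [H1|H1] := eqVneq c1 0.
  have H2 : c2 != 0 by apply: contraNneq Hc => ->; rewrite H1.
  have [j Hj] := row_neq0 H2.
  exists (unitvec j 1, 0); rewrite sformE /= dot_unit dot0r sub0r mulr1 oppr_eq0 //.
have [j Hj] := row_neq0 H1.
exists (0, unitvec j 1); rewrite sformE /= dot_unit dot0r subr0 mulr1 //.
Qed.

Lemma sum_ch_sform (c : vec) : c != 0 -> \sum_(x : vec) ch (sform c x) = 0.
Proof.
move=> Hc; have [g Hg] := sform_nondeg Hc.
rewrite (eq_bigl (fun u => u \in [set: vec])); last by move=> u; rewrite in_setT.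
apply: (@char_sum0 [set: vec] (sform c) g) => //; try by move=> *; rewrite in_setT.
by move=> u v; exact: (sformDr u v c).
Qed.


Definition W (S : {set 'I_n}) : {set vec} := [set w | supp w \subset S].

Lemma suppP (S : {set 'I_n}) (y : vec) :
  reflect (forall j, j \notin S -> y.1 0 j = 0 /\ y.2 0 j = 0) (supp y \subset S).
Proof.
apply: (iffP subsetP) => H j.
  move=> Hj; have : j \notin supp y by apply: contra Hj; apply: H.
  by rewrite inE negb_or !negbK => /andP [/eqP -> /eqP ->].
rewrite inE => Hj; apply/negPn/negP => /H [H1 H2].
by move: Hj; rewrite H1 H2 eqxx.
Qed.

Lemma proj_id (S : {set 'I_n}) (y : vec) : supp y \subset S -> proj S y = y.
Proof.
move/suppP => H; case: y H => y1 y2 H; rewrite /proj /=.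
congr pair; apply/rowP => j; rewrite mxE; case: ifP => // /negbT /H [] //=.
Qed.

Lemma supp_proj (S : {set 'I_n}) (y : vec) : supp (proj S y) \subset S.
Proof. by apply/suppP => j Hj; rewrite /proj /= !mxE (negbTE Hj). Qed.

Lemma projC0 (S : {set 'I_n}) (y : vec) : (proj (~: S) y == 0) = (supp y \subset S).
Proof.
apply/eqP/suppP => [H j Hj|H].
  move: H => [] /rowP /(_ j) H1 /rowP /(_ j) H2.
  by move: H1 H2; rewrite !mxE inE Hj.
congr pair; apply/rowP => j; rewrite !mxE inE; case: ifP => // Hj;
  by have [H1 H2] := H j Hj; rewrite ?H1 ?H2.
Qed.

Lemma sform_proj (S : {set 'I_n}) (c y : vec) :
  sform c (proj S y) = sform (proj S c) y.
Proof.
rewrite !sformE /dot /=; congr (_ - _); apply: eq_bigr => j _; rewrite !mxE;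
  by case: ifP; rewrite ?mulr0 ?mul0r.
Qed.

Lemma sform_proj_supp (S : {set 'I_n}) (c y : vec) :
  supp c \subset S -> sform c (proj S y) = sform c y.
Proof. by move=> H; rewrite sform_proj proj_id. Qed.

Lemma proj_add (S : {set 'I_n}) (u v : vec) : proj S (u + v) = proj S u + proj S v.
Proof.
by rewrite /proj /=; congr pair; apply/rowP => j; rewrite !mxE; case: ifP; rewrite ?addr0.
Qed.

Lemma proj_projC (S : {set 'I_n}) (y : vec) : proj S (proj (~: S) y) = 0.
Proof.
by rewrite /proj /=; congr pair; apply/rowP => j; rewrite !mxE inE; case: (j \in S); rewrite /= ?mxE.
Qed.

Lemma W_add (S : {set 'I_n}) u v : u \in W S -> v \in W S -> u + v \in W S.
Proof.
rewrite !inE => /suppP Hu /suppP Hv; apply/suppP => j Hj.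
by have [H1 H2] := Hu j Hj; have [H3 H4] := Hv j Hj; rewrite /= !mxE H1 H2 H3 H4 !addr0.
Qed.

Lemma W_opp (S : {set 'I_n}) u : u \in W S -> - u \in W S.
Proof.
rewrite !inE => /suppP Hu; apply/suppP => j Hj.
by have [H1 H2] := Hu j Hj; rewrite /= !mxE H1 H2 !oppr0.
Qed.

Lemma W_sub (S : {set 'I_n}) u v : u \in W S -> v \in W S -> u - v \in W S.
Proof. by move=> Hu Hv; apply: W_add => //; apply: W_opp. Qed.

Lemma W_sub_set (S1 S2 : {set 'I_n}) u : S1 \subset S2 -> u \in W S1 -> u \in W S2.
Proof. by rewrite !inE => H1 H2; apply: subset_trans H2 H1. Qed.


Variable C : {set vec}.
Hypothesis HC : code_subspace C.
Variables I J : {set 'I_n}.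
Hypothesis HIJ : I \subset J.
Hypothesis Hsh : shortening I (puncturing J (sdual C)) = shortening I C.
Variable lam : op -> algC.

Lemma C0 : 0 \in C.
Proof. by case: HC. Qed.

Lemma C_add u v : u \in C -> v \in C -> u + v \in C.
Proof.
case: HC => _ H Hu Hv; have := H 1 u v Hu Hv.
by rewrite !scale1r; case: u {Hu} => u1 u2; case: v {Hv}.
Qed.

Lemma C_sub u v : u \in C -> v \in C -> u - v \in C.
Proof.
case: HC => _ H Hu Hv; have := H (-1) v u Hv Hu.
rewrite !scaleN1r; case: u {Hu} => u1 u2; case: v {Hv} => v1 v2 /=.
by rewrite (addrC (- v1)) (addrC (- v2)).
Qed.

Definition CJ : {set vec} := [set c in C | supp c \subset J].

Lemma CJ_C c : c \in CJ -> c \in C.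
Proof. by rewrite inE => /andP []. Qed.
Lemma CJ_W c : c \in CJ -> c \in W J.
Proof. by rewrite !inE => /andP []. Qed.
Lemma CJ0 : 0 \in CJ.
Proof. rewrite !inE C0 /=; apply/suppP => j _; by rewrite /= mxE. Qed.
Lemma CJ_add u v : u \in CJ -> v \in CJ -> u + v \in CJ.
Proof.
move=> Hu Hv; have := W_add (CJ_W Hu) (CJ_W Hv).
by rewrite !inE C_add ?CJ_C.
Qed.
Lemma CJ_sub u v : u \in CJ -> v \in CJ -> u - v \in CJ.
Proof.
move=> Hu Hv; have := W_sub (CJ_W Hu) (CJ_W Hv).
by rewrite !inE C_sub ?CJ_C.
Qed.

Lemma duality (v : vec) : v \in W J -> (forall c, c \in CJ -> sform c v = 0) ->
  exists2 y, y \in sdual C & proj J y = v.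
Proof.
move=> HvJ Hv.
case: (boolP [exists y in sdual C, proj J y == v]) => [/exists_inP [y Hy /eqP Hpy]|Hno].
  by exists y.
exfalso; move: Hno => /exists_inPn Hno.
pose T := \sum_(x : vec) \sum_(c in C) ch (sform c (v + proj (~: J) x)).
have T0 : T = 0.
  rewrite /T big1 // => x _.
  set y := v + proj (~: J) x.
  have Hy : proj J y = v by rewrite /y proj_add proj_projC addr0 proj_id //; move: HvJ; rewrite inE.
  have : y \notin sdual C by apply/negP => /Hno; rewrite Hy eqxx.
  rewrite inE => /forall_inPn [c Hc Hcy].
  apply: (@char_sum0 C (fun c => sform c y) c) => //.
  - exact: C_add.
  - exact: C_sub.
  - by move=> u w; exact: sformDl.
have T1 : T = (#|CJ| * #|{: vec}|)%:R.
  rewrite /T exchange_big /=.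
  rewrite (eq_bigr (fun c => if supp c \subset J then #|{: vec}|%:R else 0)); last first.
    move=> c Hc; under eq_bigr => x _ do rewrite sformDr (ch_add Hp) sform_proj.
    rewrite -big_distrr /=; case: ifP => HcJ.
      rewrite Hv ?inE ?Hc ?HcJ // ch0 mul1r.
      move: HcJ; rewrite -projC0 => /eqP ->.
      under eq_bigr => x _ do rewrite sform0l ch0.
      by rewrite sumr_const.
    by rewrite sum_ch_sform ?mulr0 // projC0 HcJ.
  rewrite -big_mkcondr /= sumr_const mulnC mulrnA; congr (_ *+ _).
  by apply: eq_card => c; rewrite inE.
move: T0; rewrite T1 => /eqP; rewrite pnatr_eq0 muln_eq0 => /orP [] /eqP H.
  by have := card0_eq H 0; rewrite CJ0.
by have := card0_eq H 0.
Qed.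


Lemma WI_WJ u : u \in W I -> u \in W J.
Proof. exact: W_sub_set. Qed.

Lemma orth_inC (v : vec) : v \in W I -> (forall c, c \in CJ -> sform c v = 0) -> v \in C.
Proof.
move=> HvI Hv; have [y Hy Hpy] := duality (WI_WJ HvI) Hv.
have HvI' : supp v \subset I by move: HvI; rewrite inE.
have : v \in shortening I (puncturing J (sdual C)).
  apply/imsetP; exists v; last by rewrite proj_id.
  by rewrite inE HvI' andbT; apply/imsetP; exists y.
rewrite Hsh => /imsetP [c]; rewrite inE => /andP [Hc HcI] ->.
by rewrite proj_id.
Qed.


Definition lamE (c : vec) := lam (Eop c).
Definition mu c := if lamE c == 0 then 1 else (lamE c)^-1.
Definition Nc : algC := #|CJ|%:R.
Definition P0 : op :=
  scaleop Nc^-1 (osum (fun c => c \in CJ) (fun c => scaleop (mu c) (Eop c))).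
Definition seq_eq (t w : vec) := [forall c in CJ, sform c t == sform c w].
Definition corr (w : vec) : vec :=
  if [pick t in W I | seq_eq t w] is Some t then t else proj J w.

Lemma mu_neq0 c : mu c != 0.
Proof. rewrite /mu; case: (lamE c =P 0) => [_|H]; rewrite ?oner_neq0 // invr_eq0; exact/eqP. Qed.

Lemma Nc_neq0 : Nc != 0.
Proof.
rewrite /Nc pnatr_eq0; apply/negP => /eqP H.
by have := card0_eq H 0; rewrite CJ0.
Qed.

Lemma corr_W w : corr w \in W J.
Proof.
rewrite /corr; case: pickP => [t /andP [Ht _]|_]; first exact: WI_WJ.
by rewrite inE supp_proj.
Qed.

Lemma corr_eq w c : c \in CJ -> sform c (corr w) = sform c w.
Proof.
move=> Hc; rewrite /corr; case: pickP => [t /andP [_ /forall_inP /(_ c Hc) /eqP //]|_].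
by rewrite sform_proj_supp //; move: Hc; rewrite inE => /andP [].
Qed.

Lemma corr_I w e : e \in W I -> seq_eq e w -> corr w \in W I.
Proof.
move=> He Hs; rewrite /corr; case: pickP => [t /andP [Ht _] //|/(_ e)].
by rewrite He Hs.
Qed.

Definition gam (c d : vec) : algC :=
  (Nc^-1)^* * Nc^-1 * ((mu c)^* * mu d) * (ch (dot c.2 c.1) * ch (dot (- c).2 d.1)).

Lemma P0adjP0 : mulop (adjop P0) P0 =
  osum (fun c => c \in CJ) (fun c => osum (fun d => d \in CJ)
     (fun d => scaleop (gam c d) (Eop (- c + d)))).
Proof.
rewrite /P0 adjopZ adjop_sum mulopZl mulopZr scaleopA mulop_suml scaleop_sum.
apply: eq_osum => c Hc.
rewrite mulop_sumr scaleop_sum; apply: eq_osum => d Hd.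
rewrite adjopZ mulopZl mulopZr Eadj mulopZl Emul !scaleopA /gam; congr scaleop; ring.
Qed.

Lemma conj_osum (t : vec) (T : finType) (P : pred T) (f : T -> algC) (v : T -> vec) :
  mulop (mulop (Eop t) (osum P (fun i => scaleop (f i) (Eop (v i))))) (adjop (Eop t)) =
  osum P (fun i => scaleop (f i * ch (sform (v i) t)) (Eop (v i))).
Proof.
rewrite mulop_sumr mulop_suml; apply: eq_osum => i _.
by rewrite mulopZr mulopZl Econj scaleopA.
Qed.

Lemma conj_osum2 (t : vec) (T : finType) (P : pred T) (G : T -> op) :
  mulop (mulop (Eop t) (osum P G)) (adjop (Eop t)) =
  osum P (fun i => mulop (mulop (Eop t) (G i)) (adjop (Eop t))).
Proof. by rewrite mulop_sumr mulop_suml. Qed.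


Definition kappa : algC :=
  (Nc^-1)^* * Nc^-1 * #|{: vec}|%:R * \sum_(c in CJ) (mu c)^* * mu c.

Lemma kappa_gt0 : 0 < kappa.
Proof.
rewrite /kappa -normCKC; apply: mulr_gt0; first apply: mulr_gt0.
- by rewrite exprn_gt0 // normr_gt0 invr_eq0 Nc_neq0.
- rewrite ltr0n; apply/card_gt0P; by exists 0.
rewrite lt_def; apply/andP; split; last first.
  by apply: sumr_ge0 => c _; rewrite -normCKC exprn_ge0.
apply/negP => /eqP H.
have Hge : forall c, c \in CJ -> 0 <= (mu c)^* * mu c.
  by move=> c _; rewrite -normCKC exprn_ge0.
have := psumr_eq0P Hge H CJ0 => /eqP.
rewrite -normCKC sqrf_eq0 normr_eq0; apply/negP; exact: mu_neq0.
Qed.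

Definition alpha : algC := sqrtC (kappa^-1).

Lemma alpha_norm : alpha^* * alpha * kappa = 1.
Proof.
have Hk := kappa_gt0.
have Ha : alpha^* = alpha.
  apply: conj_Creal; apply: ger0_real; rewrite sqrtC_ge0 invr_ge0; exact: ltW.
rewrite Ha -expr2 sqrtCK mulVf //; exact: lt0r_neq0.
Qed.

Definition K (w : vec) : op := scaleop alpha (mulop P0 (adjop (Eop (corr w)))).

Lemma KadjK w : mulop (adjop (K w)) (K w) =
  scaleop (alpha^* * alpha) (osum (fun c => c \in CJ) (fun c => osum (fun d => d \in CJ)
     (fun d => scaleop (gam c d * ch (sform (- c + d) (corr w))) (Eop (- c + d))))).
Proof.
rewrite /K adjopZ adjopM adjopK mulopZl mulopZr scaleopA; congr scaleop.
rewrite mulopA -(mulopA (adjop P0)) -mulopA P0adjP0.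
rewrite conj_osum2; apply: eq_osum => c _; exact: conj_osum.
Qed.

Lemma complete : osum predT (fun w => mulop (adjop (K w)) (K w)) = @idop p n.
Proof.
opext; rewrite /osum.
under eq_bigr => w _ do rewrite KadjK /scaleop /osum.
transitivity (\sum_(c in CJ) \sum_(d in CJ) alpha^* * alpha * gam c d * Eop (- c + d) y x *
   \sum_(w : vec) ch (sform (- c + d) w)).
  under eq_bigr => w _ do rewrite big_distrr /=.
  rewrite exchange_big /=; apply: eq_bigr => c Hc.
  under eq_bigr => w _ do rewrite big_distrr /=.
  rewrite exchange_big /=; apply: eq_bigr => d Hd.
  rewrite big_distrr /=; apply: eq_bigr => w _.
  have Hv : - c + d \in CJ by rewrite addrC; exact: CJ_sub.
  rewrite corr_eq //; ring.
have E : \sum_(c in CJ) alpha^* * alpha * ((Nc^-1)^* * Nc^-1 * #|{: vec}|%:R * ((mu c)^* * mu c)) * idop y x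
   = alpha^* * alpha * kappa * idop y x.
  by rewrite /kappa -big_distrl -!big_distrr.
rewrite alpha_norm mul1r in E; rewrite -E; apply: eq_bigr => c Hc.
rewrite (bigD1 c) //= [X in _ + X]big1 ?addr0; last first.
  move=> d /andP [Hd Hdc]; rewrite sum_ch_sform ?mulr0 //.
  by apply: contra Hdc; rewrite addrC subr_eq0.
have -> : - c + c = 0 by rewrite addNr.
rewrite E0.
under eq_bigr => w _ do rewrite sform0l ch0.
rewrite sumr_const /gam /= dotNl -(ch_add Hp) addrN ch0; ring.
Qed.


Definition loc (A : op) := forall u x,
  A u x = (agree_off J u x)%:R * A (restr J u) (restr J x).

Lemma liftJ_loc A : loc A -> liftJ J A = A.
Proof. by move=> H; opext; rewrite /liftJ -H. Qed.

Lemma loc_scale c A : loc A -> loc (scaleop c A).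
Proof. by move=> H u x; rewrite /scaleop H; ring. Qed.

Lemma loc_osum (T : finType) (P : pred T) (G : T -> op) :
  (forall i, P i -> loc (G i)) -> loc (osum P G).
Proof.
move=> H u x; rewrite /osum big_distrr /=; apply: eq_bigr => i Hi; exact: H.
Qed.

Lemma restr_in (u : cfg) j : j \in J -> restr J u j = u j.
Proof. by move=> Hj; rewrite ffunE Hj. Qed.
Lemma restr_out (u : cfg) j : j \notin J -> restr J u j = 0.
Proof. by move=> Hj; rewrite ffunE (negbTE Hj). Qed.

Lemma loc_E v : v \in W J -> loc (Eop v).
Proof.
rewrite inE => /suppP Hv u x; rewrite !Eop_E.
have -> : rdot v.2 (restr J x) = rdot v.2 x.
  apply: eq_bigr => j _; case: (boolP (j \in J)) => Hj; first by rewrite restr_in.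
  by have [_ ->] := Hv j Hj; rewrite !mul0r.
rewrite mulrA -natrM mulnb; congr (_%:R * _); congr nat_of_bool.
apply/eqP/andP => [Hu|[/forallP Ha /eqP Hr]].
  split.
    apply/forallP => j; apply/implyP => Hj.
    by rewrite Hu !ffunE; have [-> _] := Hv j Hj; rewrite addr0.
  apply/eqP/ffunP => j; rewrite !ffunE; case: ifP => Hj.
    by rewrite Hu !ffunE.
  by have [-> _] := Hv j (negbT Hj); rewrite addr0.
apply/ffunP => j; rewrite !ffunE.
have : restr J u j = (restr J x + rf v.1) j by rewrite Hr.
rewrite !ffunE.
case: ifP => Hj //.
move/negbT: Hj => Hj; have := implyP (Ha j) Hj => /eqP ->.
by move=> _; have [-> _] := Hv j Hj; rewrite addr0.
Qed.

Lemma loc_K w : loc (K w).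
Proof.
rewrite /K /P0 mulopZl mulop_suml; apply: loc_scale; apply: loc_scale.
apply: loc_osum => c Hc.
rewrite mulopZl Eadj mulopZr Emul; do 3 apply: loc_scale.
apply: loc_E; apply: W_add; [exact: CJ_W | apply: W_opp; exact: corr_W].
Qed.


Lemma applyop_scalev (A : op) s (v : ket) :
  applyop A (fun u => s * v u) = (fun u => s * applyop A v u).
Proof.
apply: functional_extensionality => u; rewrite /applyop big_distrr /=.
by apply: eq_bigr => z _; rewrite mulrCA.
Qed.

Lemma applyop_zero (A : op) : applyop A (fun _ => 0) = (fun _ => 0).
Proof.
apply: functional_extensionality => u; rewrite /applyop big1 // => z _; exact: mulr0.
Qed.

Section Qstate.
Variable phi : ket.
Hypothesis Hphi : Qcode C lam phi.

Lemma Q_E c : c \in C -> applyop (Eop c) phi = (fun u => lamE c * phi u).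
Proof. by move=> Hc; apply: functional_extensionality => u; apply: Hphi; constructor. Qed.

Lemma Q_zero c : c \in C -> lamE c = 0 -> phi = (fun _ => 0).
Proof.
move=> Hc H0; apply: functional_extensionality => u.
have := congr1 (fun f => f (u + rf c.1)) (Q_E Hc); rewrite applyopE /= H0 mul0r addrK.
move/eqP; rewrite mulf_eq0 (negbTE (ch_neq0 Hp _)) /= => /eqP //.
Qed.

Lemma P0_on (v : vec) : (forall c, c \in CJ -> lamE c != 0) ->
  applyop P0 (applyop (Eop v) phi) =
  (fun u => (Nc^-1 * \sum_(c in CJ) ch (- sform c v)) * applyop (Eop v) phi u).
Proof.
move=> Hnz; rewrite /P0 applyopZ applyop_sum; apply: functional_extensionality => u.
rewrite -mulrA; congr (_ * _); rewrite big_distrl /=; apply: eq_bigr => c Hc.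
rewrite applyopZ -applyopM Ecomm applyopZ applyopM Q_E ?CJ_C // applyop_scalev.
rewrite /mu (negbTE (Hnz c Hc)); field; exact: Hnz.
Qed.

Lemma Kmain e w : e \in W I -> exists s, applyop (K w) (applyop (Eop e) phi) = (fun u => s * phi u).
Proof.
move=> He.
case: (boolP [exists c in CJ, lamE c == 0]) => [/exists_inP [c Hc /eqP H0]|Hnz].
  exists 0; rewrite (Q_zero (CJ_C Hc) H0) !applyop_zero.
  by apply: functional_extensionality => u; rewrite mul0r.
have {}Hnz : forall c, c \in CJ -> lamE c != 0.
  by move=> c Hc; apply: contra Hnz => H; apply/exists_inP; exists c.
set t := corr w.
have -> : applyop (K w) (applyop (Eop e) phi) =
  (fun u => alpha * (ch (dot t.2 t.1) * ch (dot (- t).2 e.1)) *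
     applyop P0 (applyop (Eop (- t + e)) phi) u).
  rewrite /K applyopZ !applyopM -(applyopM (adjop _)) Eadj mulopZl Emul scaleopA applyopZ.
  by rewrite applyop_scalev; apply: functional_extensionality => u; rewrite mulrA.
rewrite P0_on //; set v := - t + e.
case: (boolP [exists c in CJ, sform c v != 0]) => [/exists_inP [c Hc Hcv]|Hz].
  exists 0; apply: functional_extensionality => u.
  have Hadd : forall a b : vec, - sform (a + b) v = - sform a v - sform b v.
    by move=> a b; rewrite sformDl opprD.
  rewrite (@char_sum0 CJ (fun c => - sform c v) c CJ_add CJ_sub Hadd Hc) ?mulr0 ?mul0r ?mulr0 ?oppr_eq0 //.
have Hz2 : forall c, c \in CJ -> sform c v = 0.
  move=> c0 Hc0; apply/eqP; apply: contraNT Hz => H; apply/exists_inP; by exists c0.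
have Hseq : seq_eq e w.
  apply/forall_inP => c Hc; rewrite -(corr_eq w Hc) -/t.
  have -> : e = t + v by rewrite /v addrA addrN add0r.
  by rewrite sformDr Hz2 ?addr0.
have HtI : t \in W I by apply: (corr_I He Hseq).
have HvI : v \in W I by apply: W_add => //; exact: W_opp.
rewrite Q_E; last exact: orth_inC.
eexists; apply: functional_extensionality => u; rewrite !mulrA; reflexivity.
Qed.

End Qstate.


Definition Kr (k : 'I_#|@predT vec|) : op := K (enum_val k).

Lemma kraus_osum (rho : op) :
  kraus_map Kr rho = osum predT (fun w => mulop (mulop (K w) rho) (adjop (K w))).
Proof.
opext; rewrite /kraus_map /osum /Kr.
by rewrite -(big_enum_val (fun w => mulop (mulop (K w) rho) (adjop (K w)) y x)).
Qed.

Lemma lift_Kr : (fun k => liftJ J (Kr k)) = Kr.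
Proof. by apply: functional_extensionality => k; apply: liftJ_loc; exact: loc_K. Qed.

Lemma trace_sum (T : finType) (P : pred T) (G : T -> op) :
  trace (osum P G) = \sum_(t | P t) trace (G t).
Proof. by rewrite /trace /osum exchange_big. Qed.

Lemma traceC (A B : op) : trace (mulop A B) = trace (mulop B A).
Proof. by rewrite /trace /mulop exchange_big; apply: eq_bigr => u _; apply: eq_bigr => z _; rewrite mulrC. Qed.

Lemma trace_pres rho : trace (kraus_map Kr rho) = trace rho.
Proof.
rewrite kraus_osum trace_sum.
under eq_bigr => w _ do rewrite traceC -mulopA.
rewrite -trace_sum -mulop_suml complete mul1op //.
Qed.

Lemma kraus_lin (T : finType) (P : pred T) (f : T -> algC) (G : T -> op) :
  kraus_map Kr (osum P (fun t => scaleop (f t) (G t))) =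
  osum P (fun t => scaleop (f t) (kraus_map Kr (G t))).
Proof.
rewrite kraus_osum.
under eq_osum => w _ do rewrite mulop_sumr mulop_suml.
rewrite osum_swap; apply: eq_osum => t _.
rewrite kraus_osum scaleop_sum; apply: eq_osum => w _.
by rewrite mulopZr mulopZl.
Qed.

Lemma trace_outer_E (e : vec) (v : ket) :
  trace (outer (applyop (Eop e) v)) = trace (outer v).
Proof.
rewrite /trace /outer.
under eq_bigr => u _ do rewrite applyopE rmorphM /= mulrACA (ch_mulconj Hp) mul1r.
by rewrite (reindex_inj (addIr (rf e.1))) /=; apply: eq_bigr => u _; rewrite addrK.
Qed.


Lemma R_outer (phi : ket) (e : vec) : Qcode C lam phi -> e \in W I ->
  kraus_map Kr (outer (applyop (Eop e) phi)) = outer phi.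
Proof.
move=> Hphi He.
pose s w := proj1_sig (constructive_indefinite_description _ (Kmain Hphi w He)).
have Hs w : applyop (K w) (applyop (Eop e) phi) = (fun u => s w * phi u).
  exact: (proj2_sig (constructive_indefinite_description _ (Kmain Hphi w He))).
have E : kraus_map Kr (outer (applyop (Eop e) phi)) =
    scaleop (\sum_(w | predT w) s w * (s w)^*) (outer phi).
  rewrite kraus_osum -osum_scale; apply: eq_osum => w _.
  by rewrite outer_conj Hs outerZ.
have Tr := trace_pres (outer (applyop (Eop e) phi)).
rewrite trace_outer_E E in Tr.
move: Tr; rewrite /trace /scaleop -big_distrr /= => Tr.
rewrite E; case: (eqVneq (\sum_x outer phi x x) 0) => HT.
  have H0 : forall u, phi u = 0.
    move=> u; have Hge : forall x : cfg, true -> 0 <= outer phi x x.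
      by move=> x _; rewrite /outer -normCK exprn_ge0.
    have := psumr_eq0P Hge HT (i := u) isT.
    by rewrite /outer -normCK => /eqP; rewrite sqrf_eq0 normr_eq0 => /eqP.
  by opext; rewrite /scaleop /outer !H0 !mul0r mulr0.
have -> : \sum_(w | predT w) s w * (s w)^* = 1.
  by apply: (mulIf HT); rewrite Tr mul1r.
exact: scaleop1.
Qed.


Lemma unit_W i a b : i \in I -> (unitvec i a, unitvec i b) \in W I.
Proof.
move=> Hi; rewrite inE; apply/suppP => j Hj /=; rewrite !mxE.
by have -> : (j == i) = false by apply/negP => /eqP E; move: Hj; rewrite E Hi.
Qed.

Lemma XZ_step (i : 'I_n) a b (T : finType) (w : T -> algC) (e : T -> vec) (phi : ket) :
  mulop (mulop (XZat i a b) (osum predT (fun t => scaleop (w t) (outer (applyop (Eop (e t)) phi)))))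
    (adjop (XZat i a b)) =
  osum predT (fun t => scaleop (w t) (outer (applyop (Eop ((unitvec i a, unitvec i b) + e t)) phi))).
Proof.
rewrite mulop_sumr mulop_suml; apply: eq_osum => t _.
rewrite mulopZr mulopZl outer_conj -applyopM /XZat Emul applyopZ outerZ.
by rewrite (ch_mulconj Hp) scaleop1.
Qed.

Lemma Gamma_rep (phi : ket) (s : seq 'I_n) : {subset s <= I} ->
  exists (T : finType) (w : T -> algC) (e : T -> vec),
   [/\ forall t, e t \in W I, \sum_t w t = 1 &
   foldr (@gamma_at p n) (outer phi) s =
     osum predT (fun t => scaleop (w t) (outer (applyop (Eop (e t)) phi)))].
Proof.
elim: s => [_|i s IH Hsub] /=.
  exists ('I_1 : finType), (fun _ => 1), (fun _ => 0); split.
  - move=> _; rewrite inE; apply/suppP => j _ /=; by rewrite !mxE.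
  - by rewrite big_ord1.
  - by opext; rewrite /osum big_ord1 E0 applyop1 /scaleop mul1r.
have Hi : i \in I by apply: Hsub; rewrite inE eqxx.
have [T [w [e [HeW Hw Heq]]]] : exists (T : finType) (w : T -> algC) (e : T -> vec),
   [/\ forall t, e t \in W I, \sum_t w t = 1 &
   foldr (@gamma_at p n) (outer phi) s =
     osum predT (fun t => scaleop (w t) (outer (applyop (Eop (e t)) phi)))].
  by apply: IH => j Hj; apply: Hsub; rewrite inE Hj orbT.
exists (('F_p * 'F_p) * T)%type.
exists (fun x => (p ^ 2)%:R^-1 * w x.2).
exists (fun x => (unitvec i x.1.1, unitvec i x.1.2) + e x.2); split.
- by move=> x; apply: W_add; [exact: unit_W | exact: HeW].
- rewrite -(pair_bigA _ (fun ab t => (p ^ 2)%:R^-1 * w t)) /=.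
  rewrite -(pair_bigA _ (fun a b => \sum_t (p ^ 2)%:R^-1 * w t)) /=.
  under eq_bigr => a _ do under eq_bigr => b _ do rewrite -big_distrr /= Hw mulr1.
  rewrite !sumr_const card_Fp // -mulrnA mulnn -[X in X = 1]mulr_natr mulVf //.
  by rewrite pnatr_eq0 expn_eq0 negb_and -lt0n (p_gt0 Hp).
- rewrite Heq; opext; rewrite /gamma_at /scaleop.
  under eq_bigr => a _ do under eq_bigr => b _ do rewrite XZ_step.
  rewrite /osum -(pair_bigA _ (fun ab t => (p ^ 2)%:R^-1 * w t *
     outer (applyop (Eop ((unitvec i ab.1, unitvec i ab.2) + e t)) phi) y x)) /=.
  rewrite -(pair_bigA _ (fun a b => \sum_t (p ^ 2)%:R^-1 * w t *
     outer (applyop (Eop ((unitvec i a, unitvec i b) + e t)) phi) y x)) /=.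
  rewrite big_distrr; apply: eq_bigr => a _; rewrite big_distrr; apply: eq_bigr => b _.
  by rewrite big_distrr; apply: eq_bigr => t _; rewrite /scaleop -mulrA.
Qed.

End Ops.

Unset Implicit Arguments.

Theorem proposition13 (p n : nat) (Hp : prime p)
    (C : {set vec p n}) (HC : code_subspace C) (Hso : C \subset sdual C)
    (I J : {set 'I_n}) (HI : I != set0) (HIJ : I \proper J) (HJ : J \proper [set: 'I_n])
    (lam : op p n -> algC) (Hlam : is_character C lam) :
  shortening I (puncturing J (sdual C)) = shortening I C ->
  locally_recoverable I J (Qcode C lam).
Proof.
move=> Hsh.
have HIJ' : I \subset J by case/andP: HIJ.
exists #|@predT (vec p n)|, (Kr C I J lam) => /=.
rewrite (lift_Kr Hp C HIJ' lam); split.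
  by move=> rho; exact: (trace_pres Hp HC).
move=> phi Hphi.
have Hsub : {subset enum I <= I} by move=> j; rewrite mem_enum.
have [T [w [e [HeW Hw Heq]]]] := Gamma_rep Hp phi Hsub.
have -> : kraus_map (Kr C I J lam) (GammaI I (outer phi)) = outer phi.
  rewrite /GammaI Heq kraus_lin.
  under eq_osum => t _ do rewrite (R_outer Hp HC HIJ' Hsh Hphi (HeW t)).
  by rewrite osum_scale Hw scaleop1.
by [].
Qed.
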